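(* Let $\mathcal{K}$ be a commutative ring, $\mathcal{A}$ a (possibly noncommutative) $\mathcal{K}$-ring and $P,Q$ $\mathcal{A}$-bimodules. For each $r\ge0$, the set $\mathcal{I}_r\subset\mathrm{Hom}_{\mathcal{K}}(P,Q)$ of left $r$-order $Q$-valued differential operators on $P$ (defined in the context) is stable under all four operations $\Phi\mapsto a\Phi$, $\Phi\mapsto\Phi\bullet a$, $\Phi\mapsto\Phi a$, $\Phi\mapsto a\bullet\Phi$ ($a\in\mathcal{A}$), where $(a\Phi)(p)=a\Phi(p)$, $(\Phi\bullet a)(p)=\Phi(ap)$, $(\Phi a)(p)=\Phi(p)a$, $(a\bullet\Phi)(p)=\Phi(pa)$; that is, $\mathcal{I}_r$ carries both the left and the right $\mathcal{A}$–$\mathcal{A}^\bullet$ module structures.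
   Context: A $\mathcal{K}$-ring is a unital associative $\mathcal{K}$-algebra with $1\neq0$; an $\mathcal{A}$-bimodule is a two-sided $\mathcal{A}$-module central over the center of $\mathcal{A}$. $\mathrm{Hom}_{\mathcal{K}}(P,Q)$ is an $\mathcal{A}$-bimodule via $a\Phi$ (left) and $\Phi\bullet a$ (right) as in the claim; put $\delta_a\Phi:=a\Phi-\Phi\bullet a$. For such a bimodule $M$ its center is $\{x\in M: ax=x\bullet a\ \forall a\}$. Define $\mathcal{Z}_0$ = center of $\mathrm{Hom}_{\mathcal{K}}(P,Q)$, $\mathcal{I}_0$ = sub-bimodule (for $a\Phi$, $\Phi\bullet a$) generated by $\mathcal{Z}_0$; inductively for $r\ge1$, $\mathcal{Z}_r$ = center of $\mathrm{Hom}_{\mathcal{K}}(P,Q)/\mathcal{I}_{r-1}$, $\overline{\mathcal{Z}}_r$ = sub-bimodule generated by $\mathcal{Z}_r$, and $\mathcal{I}_r$ the sub-bimodule with $\mathcal{I}_r/\mathcal{I}_{r-1}=\overline{\mathcal{Z}}_r$. Elements of $\mathcal{I}_r$ are the left $r$-order $Q$-valued differential operators on $P$ (Lunts–Rosenberg). *)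

(* Defs.v *)
From HB Require Import structures.
From mathcomp Require Import all_boot all_algebra.
Set Implicit Arguments. Unset Strict Implicit. Unset Printing Implicit Defensive.
Import GRing.Theory.
Local Open Scope ring_scope.

(* The K-module
   structure of M is the one induced by the structure map K -> A, k |-> k%:A. *)
Definition is_bimodule (K : comPzRingType) (A : algType K) (M : zmodType)
    (la : A -> M -> M) (ra : M -> A -> M) : Prop :=
  (forall a x y, la a (x + y) = la a x + la a y) /\
      (forall a b x, la (a + b) x = la a x + la b x) /\
      (forall x, la 1 x = x) /\
      (forall a b x, la (a * b) x = la a (la b x)) /\
      (forall a x y, ra (x + y) a = ra x a + ra y a) /\
      (forall a b x, ra x (a + b) = ra x a + ra x b) /\
      (forall x, ra x 1 = x) /\
      (forall a b x, ra x (a * b) = ra (ra x a) b) /\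
      (forall a b x, la a (ra x b) = ra (la a x) b) /\
      (forall z x, (forall b, z * b = b * z) -> la z x = ra x z).

Section DiffOps.
Variables (K : comPzRingType) (A : algType K) (P Q : zmodType).
Variables (laP : A -> P -> P) (raP : P -> A -> P).
Variables (laQ : A -> Q -> Q) (raQ : Q -> A -> Q).

Definition isHomK (f : P -> Q) : Prop :=
  (forall x y, f (x + y) = f x + f y) /\
  (forall (k : K) x, f (laP (k%:A) x) = laQ (k%:A) (f x)).

Definition lmulH (a : A) (f : P -> Q) : P -> Q := fun p => laQ a (f p).
Definition bulletR (f : P -> Q) (a : A) : P -> Q := fun p => f (laP a p).
Definition rmulH (f : P -> Q) (a : A) : P -> Q := fun p => raQ (f p) a.
Definition bulletL (a : A) (f : P -> Q) : P -> Q := fun p => f (raP p a).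

Definition deltaH (a : A) (f : P -> Q) : P -> Q := fun p => laQ a (f p) - f (laP a p).

Inductive gen_bimod (S : (P -> Q) -> Prop) : (P -> Q) -> Prop :=
| gen_in f : isHomK f -> S f -> gen_bimod S f
| gen_0 : gen_bimod S (fun _ => 0)
| gen_add f g : gen_bimod S f -> gen_bimod S g -> gen_bimod S (fun p => f p + g p)
| gen_lmul a f : gen_bimod S f -> gen_bimod S (lmulH a f)
| gen_bullet a f : gen_bimod S f -> gen_bimod S (bulletR f a).

(* Iprev r = I_{r-1}, with I_{-1} = 0.  I_r is generated (as a sub-bimodule
   containing I_{r-1}) by the preimage of the center Z_r of Hom/I_{r-1}. *)
Fixpoint Iprev (r : nat) : (P -> Q) -> Prop :=
  match r with
  | 0 => fun f => forall p, f p = 0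
  | r'.+1 => gen_bimod (fun f => Iprev r' f \/
               (isHomK f /\ forall a, Iprev r' (deltaH a f)))
  end.

Definition Idiff (r : nat) : (P -> Q) -> Prop := Iprev r.+1.

End DiffOps.

(* Main.v *)
Require Import Defs.
From HB Require Import structures.
From mathcomp Require Import all_boot all_algebra.
From Stdlib Require Import FunctionalExtensionality.
Import GRing.Theory.
Local Open Scope ring_scope.

Lemma addf_sub (M N : zmodType) (f : M -> N) :
  (forall x y, f (x + y) = f x + f y) -> forall x y, f (x - y) = f x - f y.
Proof.
move=> H x y; apply: (addIr (f y)); rewrite -H subrK.
by rewrite addrNK.
Qed.

Lemma addf_0 (M N : zmodType) (f : M -> N) :
  (forall x y, f (x + y) = f x + f y) -> f 0 = 0.
Proof. by move=> H; rewrite -(subrr (0:M)) (@addf_sub _ _ _ H) subrr. Qed.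

Lemma main (K : comPzRingType) (A : algType K) (P Q : zmodType)
    (laP : A -> P -> P) (raP : P -> A -> P)
    (laQ : A -> Q -> Q) (raQ : Q -> A -> Q)
    (hP : is_bimodule laP raP) (hQ : is_bimodule laQ raQ) (r : nat) :
  forall f b, Iprev laP laQ r f ->
    Iprev laP laQ r (rmulH raQ f b) /\ Iprev laP laQ r (bulletL raP b f).
Proof.
case: hP => [P1 [P2 [P3 [P4 [P5 [P6 [P7 [P8 [P9 P10]]]]]]]]].
case: hQ => [Q1 [Q2 [Q3 [Q4 [Q5 [Q6 [Q7 [Q8 [Q9 Q10]]]]]]]]].
have raQ0 : forall b, raQ 0 b = 0 by move=> b; apply: (@addf_0 _ _ (raQ^~ b)).
have raQB : forall b x y, raQ (x - y) b = raQ x b - raQ y b.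
  by move=> b; apply: (@addf_sub _ _ (raQ^~ b)).
elim: r => [|r IH] f b /=.
  move=> Hf; split => p; rewrite /rmulH /bulletL Hf ?raQ0 //.
elim => {f}.
- move=> f [Hf1 Hf2] HS.
  have HR : isHomK laP laQ (rmulH raQ f b).
    split=> [x y|k x]; rewrite /rmulH; by rewrite ?Hf1 ?Q5 ?Hf2 ?Q9.
  have HL : isHomK laP laQ (bulletL raP b f).
    split=> [x y|k x]; rewrite /bulletL; by rewrite ?P5 ?Hf1 -?P9 ?Hf2.
  case: HS => [Hs|[_ Hs]].
  + have [H1 H2] := IH _ b Hs; split; apply: gen_in => //; by left.
  + split; apply: gen_in => //; right; split => // a.
    * have [H1 _] := IH _ b (Hs a).
      have -> : deltaH laP laQ a (rmulH raQ f b) = rmulH raQ (deltaH laP laQ a f) b.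
        by apply: functional_extensionality => p; rewrite /deltaH /rmulH raQB Q9.
      exact: H1.
    * have [_ H2] := IH _ b (Hs a).
      have -> : deltaH laP laQ a (bulletL raP b f) = bulletL raP b (deltaH laP laQ a f).
        by apply: functional_extensionality => p; rewrite /deltaH /bulletL P9.
      exact: H2.
- split.
  + have -> : rmulH raQ (fun _ : P => 0) b = (fun _ => 0).
      by apply: functional_extensionality => p; rewrite /rmulH raQ0.
    exact: gen_0.
  + exact: gen_0.
- move=> f g _ [Hf1 Hf2] _ [Hg1 Hg2]; split.
  + have -> : rmulH raQ (fun p => f p + g p) b =
              (fun p => rmulH raQ f b p + rmulH raQ g b p).
      by apply: functional_extensionality => p; rewrite /rmulH Q5.
    exact: gen_add.
  + exact: gen_add.
- move=> a f _ [H1 H2]; split.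
  + have -> : rmulH raQ (lmulH laQ a f) b = lmulH laQ a (rmulH raQ f b).
      by apply: functional_extensionality => p; rewrite /rmulH /lmulH Q9.
    exact: gen_lmul.
  + exact: gen_lmul.
- move=> a f _ [H1 H2]; split.
  + exact: (gen_bullet a H1).
  + have -> : bulletL raP b (bulletR laP f a) = bulletR laP (bulletL raP b f) a.
      by apply: functional_extensionality => p; rewrite /bulletL /bulletR P9.
    exact: gen_bullet.
Qed.

Theorem proposition8 (K : comPzRingType) (A : algType K) (P Q : zmodType)
    (laP : A -> P -> P) (raP : P -> A -> P)
    (laQ : A -> Q -> Q) (raQ : Q -> A -> Q)
    (hP : is_bimodule laP raP) (hQ : is_bimodule laQ raQ)
    (r : nat) (Phi : P -> Q) (a : A) :
  Idiff laP laQ r Phi ->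
  [/\ Idiff laP laQ r (lmulH laQ a Phi),
      Idiff laP laQ r (bulletR laP Phi a),
      Idiff laP laQ r (rmulH raQ Phi a) &
      Idiff laP laQ r (bulletL raP a Phi)].
Proof.
move=> H; have [H3 H4] := @main _ _ _ _ _ _ _ _ hP hQ _ _ a H.
split => //; [exact: gen_lmul | exact: gen_bullet].
Qed.
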